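(* For all terms $e_0, e_1, \dots, e_n$: if $e_0 \Rightarrow e_1$ and $e_1, \dots, e_n \in \mathcal{R}$, then there exist terms $e_1', \dots, e_p'$ such that $e_0, e_1', \dots, e_p', e_n \in \mathcal{R}$.
   Context: Terms: $e ::= x \mid \lambda x.e \mid e\,e$ (modulo $\alpha$-equivalence, Barendregt's variable convention). Values: $v ::= \lambda x.e$. A context is a term with one hole $[\,]$; $C[e]$ is plugging, $C_1[C_2]$ composition. Answer contexts: $A ::= [\,] \mid A[\lambda x.A]\,e$. Outer partial answer contexts: $A^{\uparrow} ::= [\,] \mid A[A^{\uparrow}]\,e$. Inner partial answer contexts: $A^{\downarrow} ::= [\,] \mid A[\lambda x.A^{\downarrow}]$. Evaluation contexts: $E ::= [\,] \mid E\,e \mid A[E] \mid A^{\uparrow}[A[\lambda x.A^{\downarrow}[E[x]]]\,E]$, where in the last production $A^{\uparrow}[A^{\downarrow}]$ must be an answer context. $e\{x:=v\}$: capture-avoiding substitution for all free occurrences of $x$. Axiom $\beta_{need}$: $A^{\uparrow}[A_1[\lambda x.A^{\downarrow}[E[x]]]\,A_2[v]] \;\beta_{need}\; A^{\uparrow}[A_1[A_2[(A^{\downarrow}[E[x]])\{x:=v\}]]]$ provided $A^{\uparrow}[A^{\downarrow}]$ is an answer context. Standard reduction: $E[e]\mapsto E[e']$ for every evaluation context $E$ whenever $e\;\beta_{need}\;e'$. Parallel reduction $\Rightarrow$ on terms is the least relation such that: $e\Rightarrow e$; $A^{\uparrow}[A_1[\lambda x.A^{\downarrow}[E[x]]]\,A_2[v]]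 \Rightarrow A^{\uparrow\prime}[A_1'[A_2'[(A^{\downarrow\prime}[E'[x]])\{x:=v'\}]]]$ whenever $A^{\uparrow}[A^{\downarrow}]$, $A^{\uparrow\prime}[A^{\downarrow\prime}]$ are answer contexts and $A^{\uparrow}\Rightarrow A^{\uparrow\prime}$, $A_1\Rightarrow A_1'$, $A_2\Rightarrow A_2'$, $A^{\downarrow}\Rightarrow A^{\downarrow\prime}$, $E\Rightarrow E'$, $v\Rightarrow v'$; $e_1\,e_2\Rightarrow e_1'\,e_2'$ if $e_1\Rightarrow e_1'$, $e_2\Rightarrow e_2'$; $\lambda x.e\Rightarrow\lambda x.e'$ if $e\Rightarrow e'$. On contexts (defined simultaneously): $[\,]\Rightarrow[\,]$; $A_1[\lambda x.A_2]\,e\Rightarrow A_1'[\lambda x.A_2']\,e'$; $A[A^{\uparrow}]\,e\Rightarrow A'[A^{\uparrow\prime}]\,e'$; $A[\lambda x.A^{\downarrow}]\Rightarrow A'[\lambda x.A^{\downarrow\prime}]$; $E\,e\Rightarrow E'\,e'$; $A[E]\Rightarrow A'[E']$; $A^{\uparrow}[A[\lambda x.A^{\downarrow}[E_1[x]]]\,E_2]\Rightarrow A^{\uparrow\prime}[A'[\lambda x.A^{\downarrow\prime}[E_1'[x]]]\,E_2']$ (with $A^{\uparrow}[A^{\downarrow}]$ an answer context), in each case provided every primed component is a parallel reduct of the corresponding unprimed one. The set $\mathcal{R}$ of standard reduction sequences is the least set of finite nonempty sequences of terms such that: (1) for every variable $x$, the sequence $x$ is in $\mathcal{R}$; (2)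 if $e_1,\dots,e_m\in\mathcal{R}$ then $\lambda x.e_1,\dots,\lambda x.e_m\in\mathcal{R}$; (3) if $e_0\mapsto e_1$ and $e_1,\dots,e_m\in\mathcal{R}$ then $e_0,e_1,\dots,e_m\in\mathcal{R}$; (4) if $e_1,\dots,e_m\in\mathcal{R}$ and $e_1',\dots,e_n'\in\mathcal{R}$ then $(e_1\,e_1'),\dots,(e_m\,e_1'),(e_m\,e_2'),\dots,(e_m\,e_n')\in\mathcal{R}$. *)

(* Defs.v *)
From Stdlib Require Import List Arith.
Import ListNotations.

Inductive term : Type :=
| Var : nat -> term
| Lam : term -> term
| App : term -> term -> term.

Definition value (t : term) : Prop := exists b, t = Lam b.

Fixpoint shift (d c : nat) (t : term) : term :=
  match t with
  | Var n => if c <=? n then Var (n + d) else Var n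
  | Lam b => Lam (shift d (S c) b)
  | App t1 t2 => App (shift d c t1) (shift d c t2)
  end.

(* subst k u t : capture-avoiding substitution of u (living outside the k
   binders) for index k, decrementing the free indices above k. *)
Fixpoint subst (k : nat) (u : term) (t : term) : term :=
  match t with
  | Var n => if n =? k then shift k 0 u
             else if k <? n then Var (n - 1) else Var n
  | Lam b => Lam (subst (S k) u b)
  | App t1 t2 => App (subst k u t1) (subst k u t2)
  end.

(* Contexts: terms with exactly one hole.  Plugging captures (binders on the
   path to the hole scope over the plugged term), as in the paper. *)
Inductive ctx : Type :=
| Hole : ctx
| CAppL : ctx -> term -> ctx
| CAppR : term -> ctx -> ctx
| CLam : ctx -> ctx.

Fixpoint plug (C : ctx) (t : term) : term :=
  match C with
  | Hole => t
  | CAppL C e => App (plug C t) e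
  | CAppR e C => App e (plug C t)
  | CLam C => Lam (plug C t)
  end.

Fixpoint compose (C1 C2 : ctx) : ctx :=
  match C1 with
  | Hole => C2
  | CAppL C e => CAppL (compose C C2) e
  | CAppR e C => CAppR e (compose C C2)
  | CLam C => CLam (compose C C2)
  end.

Fixpoint depth (C : ctx) : nat :=
  match C with
  | Hole => 0
  | CAppL C _ => depth C
  | CAppR _ C => depth C
  | CLam C => S (depth C)
  end.

Fixpoint shift_ctx (d c : nat) (C : ctx) : ctx :=
  match C with
  | Hole => Hole
  | CAppL C e => CAppL (shift_ctx d c C) (shift d c e)
  | CAppR e C => CAppR (shift d c e) (shift_ctx d c C)
  | CLam C => CLam (shift_ctx d (S c) C)
  end.

Inductive isA : ctx -> Prop :=
| isA_hole : isA Hole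
| isA_app : forall A1 A2 e, isA A1 -> isA A2 ->
    isA (CAppL (compose A1 (CLam A2)) e).

Inductive isAup : ctx -> Prop :=
| isAup_hole : isAup Hole
| isAup_app : forall A Au e, isA A -> isAup Au ->
    isAup (CAppL (compose A Au) e).

Inductive isAdown : ctx -> Prop :=
| isAdown_hole : isAdown Hole
| isAdown_lam : forall A Ad, isA A -> isAdown Ad ->
    isAdown (compose A (CLam Ad)).

(* the term  λx.A^down[E[x]]  (x bound by this λ) *)
Definition lam_need (Ad E : ctx) : term :=
  Lam (plug Ad (plug E (Var (depth E + depth Ad)))).

Inductive isE : ctx -> Prop :=
| isE_hole : isE Hole
| isE_appl : forall E e, isE E -> isE (CAppL E e)
| isE_ans : forall A E, isA A -> isE E -> isE (compose A E)
| isE_need : forall Au A Ad E1 E2,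
    isAup Au -> isA A -> isAdown Ad -> isE E1 -> isE E2 ->
    isA (compose Au Ad) ->
    isE (compose Au (CAppR (plug A (lam_need Ad E1)) E2)).

Definition redex (Au A1 Ad E A2 : ctx) (v : term) : term :=
  plug Au (App (plug A1 (lam_need Ad E)) (plug A2 v)).

(* Contractum  A^up[A1[A2[(A^down[E[x]]){x:=v}]]]  (in de Bruijn form:
   A2 is moved under the binders of A1, v under those of A1 and A2). *)
Definition contractum (Au A1 Ad E A2 : ctx) (v : term) : term :=
  let k1 := depth A1 in
  let k2 := depth A2 in
  plug Au (plug A1 (plug (shift_ctx k1 0 A2)
    (subst 0 (shift k1 k2 v)
       (shift k2 1 (plug Ad (plug E (Var (depth E + depth Ad)))))))).

Inductive beta_need : term -> term -> Prop :=
| beta_need_intro : forall Au A1 Ad E A2 v,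
    isAup Au -> isA A1 -> isAdown Ad -> isE E -> isA A2 -> value v ->
    isA (compose Au Ad) ->
    beta_need (redex Au A1 Ad E A2 v) (contractum Au A1 Ad E A2 v).

Inductive std_step : term -> term -> Prop :=
| std_step_intro : forall E r r', isE E -> beta_need r r' ->
    std_step (plug E r) (plug E r').

Inductive pr : term -> term -> Prop :=
| pr_refl : forall e, pr e e
| pr_beta : forall Au A1 Ad E A2 v Au' A1' Ad' E' A2' v',
    isAup Au -> isA A1 -> isAdown Ad -> isE E -> isA A2 -> value v ->
    isA (compose Au Ad) ->
    isAup Au' -> isA A1' -> isAdown Ad' -> isE E' -> isA A2' -> value v' ->
    isA (compose Au' Ad') ->
    pr_ctx Au Au' -> pr_ctx A1 A1' -> pr_ctx A2 A2' -> pr_ctx Ad Ad' ->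
    pr_ctx E E' -> pr v v' ->
    pr (redex Au A1 Ad E A2 v) (contractum Au' A1' Ad' E' A2' v')
| pr_app : forall e1 e2 e1' e2', pr e1 e1' -> pr e2 e2' ->
    pr (App e1 e2) (App e1' e2')
| pr_lam : forall e e', pr e e' -> pr (Lam e) (Lam e')
with pr_ctx : ctx -> ctx -> Prop :=
| prc_hole : pr_ctx Hole Hole
| prc_A : forall A1 A2 e A1' A2' e',
    isA A1 -> isA A2 -> isA A1' -> isA A2' ->
    pr_ctx A1 A1' -> pr_ctx A2 A2' -> pr e e' ->
    pr_ctx (CAppL (compose A1 (CLam A2)) e) (CAppL (compose A1' (CLam A2')) e')
| prc_Aup : forall A Au e A' Au' e',
    isA A -> isAup Au -> isA A' -> isAup Au' ->
    pr_ctx A A' -> pr_ctx Au Au' -> pr e e' ->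
    pr_ctx (CAppL (compose A Au) e) (CAppL (compose A' Au') e')
| prc_Adown : forall A Ad A' Ad',
    isA A -> isAdown Ad -> isA A' -> isAdown Ad' ->
    pr_ctx A A' -> pr_ctx Ad Ad' ->
    pr_ctx (compose A (CLam Ad)) (compose A' (CLam Ad'))
| prc_Eapp : forall E e E' e',
    isE E -> isE E' -> pr_ctx E E' -> pr e e' ->
    pr_ctx (CAppL E e) (CAppL E' e')
| prc_Eans : forall A E A' E',
    isA A -> isE E -> isA A' -> isE E' ->
    pr_ctx A A' -> pr_ctx E E' ->
    pr_ctx (compose A E) (compose A' E')
| prc_Eneed : forall Au A Ad E1 E2 Au' A' Ad' E1' E2',
    isAup Au -> isA A -> isAdown Ad -> isE E1 -> isE E2 ->
    isA (compose Au Ad) ->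
    isAup Au' -> isA A' -> isAdown Ad' -> isE E1' -> isE E2' ->
    isA (compose Au' Ad') ->
    pr_ctx Au Au' -> pr_ctx A A' -> pr_ctx Ad Ad' ->
    pr_ctx E1 E1' -> pr_ctx E2 E2' ->
    pr_ctx (compose Au (CAppR (plug A (lam_need Ad E1)) E2))
           (compose Au' (CAppR (plug A' (lam_need Ad' E1')) E2')).

Inductive R : list term -> Prop :=
| R_var : forall n, R [Var n]
| R_lam : forall e l, R (e :: l) -> R (map Lam (e :: l))
| R_step : forall e0 e1 l, std_step e0 e1 -> R (e1 :: l) -> R (e0 :: e1 :: l)
| R_app : forall e1 l f1 l', R (e1 :: l) -> R (f1 :: l') ->
    R (map (fun e => App e f1) (e1 :: l) ++ map (App (last l e1)) l').

(* Main.v *)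
Require Import Defs.
From Stdlib Require Import List.
From Stdlib Require Import Arith Lia.
Import ListNotations.

Ltac cmp := cbn [shift subst]; repeat (match goal with
 | |- context [?a <=? ?b] => destruct (Nat.leb_spec a b)
 | |- context [?a =? ?b] => destruct (Nat.eqb_spec a b)
 | |- context [?a <? ?b] => destruct (Nat.ltb_spec a b)
 end; cbn [shift subst]).

Lemma shift_0 : forall t c, shift 0 c t = t.
Proof. induction t; intros; cmp; f_equal; auto; try lia. Qed.

Lemma shift_shift_merge : forall t p n c i, c <= i <= c + n ->
  shift p i (shift n c t) = shift (p+n) c t.
Proof.
  induction t; intros; cmp; try (f_equal; lia); f_equal; auto.
  apply IHt; lia.
Qed.

Lemma shift_shift_perm : forall t p n c i, i <= c ->
  shift p i (shift n c t) = shift n (p + c) (shift p i t).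
Proof.
  induction t; intros; cmp; try (f_equal; lia); f_equal; auto.
  replace (S (p + c)) with (p + S c) by lia. apply IHt; lia.
Qed.

Lemma shift_subst_lo : forall t p k n u, k <= n ->
  shift p k (subst n u t) = subst (p+n) u (shift p k t).
Proof.
  induction t; intros; cmp; try (f_equal; lia); try (exfalso; lia).
  - rewrite shift_shift_merge by lia; reflexivity.
  - f_equal. replace (S (p+n)) with (p + S n) by lia. apply IHt; lia.
  - f_equal; auto.
Qed.

Lemma shift_subst_hi : forall t p k n u, n <= k ->
  shift p k (subst n u t) = subst n (shift p (k-n) u) (shift p (S k) t).
Proof.
  induction t; intros; cmp; try (f_equal; lia); try (exfalso; lia).
  - subst. symmetry. rewrite shift_shift_perm by lia. f_equal. lia.
  - f_equal. rewrite IHt by lia. repeat f_equal; lia.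
  - f_equal; auto.
Qed.

Lemma subst_shift_cancel : forall t u p n k, k <= p <= n + k ->
  subst p u (shift (S n) k t) = shift n k t.
Proof.
  induction t; intros; cmp; try (f_equal; lia); try (exfalso; lia).
  - f_equal. apply IHt; lia.
  - f_equal; auto.
Qed.

Lemma subst_subst : forall T U V p n,
  subst (p+n) V (subst n U T) = subst n (subst p V U) (subst (S (p+n)) V T).
Proof.
  induction T; intros; cmp; try (f_equal; lia); try (exfalso; lia).
  - subst. rewrite shift_subst_lo by lia. f_equal; lia.
  - subst. rewrite subst_shift_cancel by lia. reflexivity.
  - f_equal. replace (S (p+n)) with (p + S n) by lia. rewrite IHT. f_equal.
  - f_equal; auto.
Qed.

Fixpoint mapc (f : nat -> term -> term) (l : nat) (C : ctx) : ctx :=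
  match C with
  | Hole => Hole
  | CAppL C e => CAppL (mapc f l C) (f l e)
  | CAppR e C => CAppR (f l e) (mapc f l C)
  | CLam C => CLam (mapc f (S l) C)
  end.

Definition structural (f : nat -> term -> term) : Prop :=
  (forall l b, f l (Lam b) = Lam (f (S l) b)) /\
  (forall l a b, f l (App a b) = App (f l a) (f l b)) /\
  (forall l n, n < l -> f l (Var n) = Var n).

Lemma plug_compose : forall C1 C2 t, plug (compose C1 C2) t = plug C1 (plug C2 t).
Proof. induction C1; intros; simpl; f_equal; auto. Qed.

Lemma depth_compose : forall C1 C2, depth (compose C1 C2) = depth C1 + depth C2.
Proof. induction C1; intros; simpl; auto. Qed.

Lemma compose_assoc : forall C1 C2 C3, compose (compose C1 C2) C3 = compose C1 (compose C2 C3).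
Proof. induction C1; intros; simpl; f_equal; auto. Qed.

Lemma compose_hole_r : forall C, compose C Hole = C.
Proof. induction C; simpl; f_equal; auto. Qed.

Section Map.
Variable f : nat -> term -> term.
Hypothesis Hf : structural f.

Lemma plug_map : forall C l t, f l (plug C t) = plug (mapc f l C) (f (l + depth C) t).
Proof.
  destruct Hf as [HL [HA HV]].
  induction C; intros; simpl.
  - rewrite Nat.add_0_r; reflexivity.
  - rewrite HA, IHC. reflexivity.
  - rewrite HA, IHC. reflexivity.
  - rewrite HL, IHC. replace (l + S (depth C)) with (S l + depth C) by lia. reflexivity.
Qed.

Lemma depth_map : forall C l, depth (mapc f l C) = depth C.
Proof. induction C; intros; simpl; auto. Qed.

Lemma compose_map : forall C1 C2 l,
  mapc f l (compose C1 C2) = compose (mapc f l C1) (mapc f (l + depth C1) C2).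
Proof.
  induction C1; intros; simpl.
  - rewrite Nat.add_0_r; reflexivity.
  - f_equal; auto.
  - f_equal; auto.
  - rewrite IHC1. replace (l + S (depth C1)) with (S l + depth C1) by lia. reflexivity.
Qed.

Lemma lam_need_map : forall Ad E l,
  f l (lam_need Ad E) = lam_need (mapc f (S l) Ad) (mapc f (S l + depth Ad) E).
Proof.
  destruct Hf as [HL [HA HV]].
  intros. unfold lam_need. rewrite HL, plug_map, plug_map, HV by lia.
  rewrite !depth_map. reflexivity.
Qed.
End Map.

Lemma shift_structural : forall d, structural (shift d).
Proof.
  intros d; split; [|split]; intros; simpl; auto.
  destruct (Nat.leb_spec l n); auto; lia.
Qed.

Lemma subst_structural : forall u, structural (fun k => subst k u).
Proof.
  intros u; split; [|split]; intros; simpl; auto.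
  destruct (Nat.eqb_spec n l); [lia|]. destruct (Nat.ltb_spec l n); auto; lia.
Qed.

Lemma shift_ctx_map : forall C d c, shift_ctx d c C = mapc (shift d) c C.
Proof. induction C; intros; simpl; f_equal; auto. Qed.

Fixpoint kinds (C : ctx) : list nat :=
  match C with
  | Hole => []
  | CAppL C _ => 0 :: kinds C
  | CAppR _ C => 1 :: kinds C
  | CLam C => 2 :: kinds C
  end.

Lemma kinds_compose : forall C1 C2, kinds (compose C1 C2) = kinds C1 ++ kinds C2.
Proof. induction C1; intros; simpl; f_equal; auto. Qed.

Lemma kinds_split : forall C k1 k2, kinds C = k1 ++ k2 ->
  exists X Y, C = compose X Y /\ kinds X = k1 /\ kinds Y = k2.
Proof.
  induction C; intros k1 k2 H; destruct k1 as [|x k1]; simpl in *.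
  - exists Hole, Hole; auto.
  - discriminate.
  - exists Hole, (CAppL C t); auto.
  - injection H as <- H. destruct (IHC _ _ H) as (X & Y & -> & H1 & H2).
    exists (CAppL X t), Y; simpl; subst; auto.
  - exists Hole, (CAppR t C); auto.
  - injection H as <- H. destruct (IHC _ _ H) as (X & Y & -> & H1 & H2).
    exists (CAppR t X), Y; simpl; subst; auto.
  - exists Hole, (CLam C); auto.
  - injection H as <- H. destruct (IHC _ _ H) as (X & Y & -> & H1 & H2).
    exists (CLam X), Y; simpl; subst; auto.
Qed.

Lemma kinds_nil : forall C, kinds C = [] -> C = Hole.
Proof. destruct C; simpl; congruence. Qed.

Lemma kinds_cons0 : forall C k, kinds C = 0 :: k -> exists C' e, C = CAppL C' e /\ kinds C' = k.
Proof. destruct C; simpl; intros; try discriminate. injection H as H. eauto. Qed.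

Lemma kinds_cons2 : forall C k, kinds C = 2 :: k -> exists C', C = CLam C' /\ kinds C' = k.
Proof. destruct C; simpl; intros; try discriminate. injection H as H. eauto. Qed.

Lemma kinds_map : forall f C l, kinds (mapc f l C) = kinds C.
Proof. induction C; intros; simpl; f_equal; auto. Qed.

Lemma isA_kinds : forall C, isA C -> forall C', kinds C' = kinds C -> isA C'.
Proof.
  induction 1; intros C' HK.
  - simpl in HK. apply kinds_nil in HK. subst. constructor.
  - simpl in HK. rewrite kinds_compose in HK. simpl in HK.
    destruct (kinds_cons0 _ _ HK) as (X & e' & -> & HX).
    destruct (kinds_split _ _ _ HX) as (X1 & Y & -> & H1 & H2).
    destruct (kinds_cons2 _ _ H2) as (Y' & -> & H3).
    constructor; auto.
Qed.

Lemma isAup_kinds : forall C, isAup C -> forall C', kinds C' = kinds C -> isAup C'.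
Proof.
  induction 1; intros C' HK.
  - simpl in HK. apply kinds_nil in HK. subst. constructor.
  - simpl in HK. rewrite kinds_compose in HK.
    destruct (kinds_cons0 _ _ HK) as (X & e' & -> & HX).
    destruct (kinds_split _ _ _ HX) as (X1 & Y & -> & H1 & H2).
    constructor; eauto using isA_kinds.
Qed.

Lemma isAdown_kinds : forall C, isAdown C -> forall C', kinds C' = kinds C -> isAdown C'.
Proof.
  induction 1; intros C' HK.
  - simpl in HK. apply kinds_nil in HK. subst. constructor.
  - rewrite kinds_compose in HK. simpl in HK.
    destruct (kinds_split _ _ _ HK) as (X1 & Y & -> & H1 & H2).
    destruct (kinds_cons2 _ _ H2) as (Y' & -> & H3).
    constructor; eauto using isA_kinds.
Qed.

Fixpoint nL (C : ctx) : nat :=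
  match C with Hole => 0 | CAppL C _ => S (nL C) | CAppR _ C => nL C | CLam C => nL C end.
Fixpoint nM (C : ctx) : nat :=
  match C with Hole => 0 | CAppL C _ => nM C | CAppR _ C => nM C | CLam C => S (nM C) end.

Lemma nL_compose : forall A B, nL (compose A B) = nL A + nL B.
Proof. induction A; intros; simpl; auto. Qed.
Lemma nM_compose : forall A B, nM (compose A B) = nM A + nM B.
Proof. induction A; intros; simpl; auto; rewrite IHA; auto. Qed.

Lemma isA_count : forall A, isA A -> nL A = nM A.
Proof. induction 1; simpl; auto. rewrite nL_compose, nM_compose. simpl. lia. Qed.
Lemma isAup_count : forall A, isAup A -> nM A <= nL A.
Proof. induction 1; simpl; auto. rewrite nL_compose, nM_compose. apply isA_count in H. lia. Qed.
Lemma isAdown_count : forall A, isAdown A -> nL A <= nM A.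
Proof. induction 1; simpl; auto. rewrite nL_compose, nM_compose. apply isA_count in H. simpl. lia. Qed.

Lemma isA_compose : forall X Y, isA X -> isA Y -> isA (compose X Y).
Proof.
  induction 1; intros HY; simpl; auto.
  rewrite compose_assoc. simpl. constructor; auto.
Qed.

Lemma isAdown_last : forall Ad, isAdown Ad -> Ad <> Hole ->
  exists Ad' A'', isAdown Ad' /\ isA A'' /\ Ad = compose Ad' (compose A'' (CLam Hole)).
Proof.
  induction 1 as [|A Ad HA HAd IH]; intros Hne; [congruence|].
  assert (Ad = Hole \/ Ad <> Hole) as [->|Hn] by (destruct Ad; [left|right..]; congruence).
  - exists Hole, A. repeat split; auto; constructor.
  - destruct (IH Hn) as (Ad' & A'' & H1 & H2 & ->).
    exists (compose A (CLam Ad')), A''. repeat split; auto.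
    + constructor; auto.
    + rewrite compose_assoc. reflexivity.
Qed.

Lemma isAdown_hole : forall Ad, isAdown Ad -> nL Ad = nM Ad -> Ad = Hole.
Proof.
  induction 1; intros; auto. rewrite nL_compose, nM_compose in H1. simpl in H1.
  apply isA_count in H. apply isAdown_count in H0. lia.
Qed.

Lemma insertion_gen : forall Au, isAup Au -> forall Ad, isAdown Ad ->
  nL Au + nL Ad = nM Au + nM Ad -> forall X, isA X -> isA (compose Au (compose X Ad)).
Proof.
  induction 1 as [|A Au e HA HAu IH]; intros Ad HAd Hc X HX.
  - simpl in Hc. rewrite (isAdown_hole Ad HAd ltac:(lia)). simpl. now rewrite compose_hole_r.
  - assert (Ad <> Hole).
    { intros ->. simpl in Hc. rewrite nL_compose, nM_compose in Hc.
      apply isA_count in HA. apply isAup_count in HAu. lia. }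
    destruct (isAdown_last Ad HAd H) as (Ad' & A'' & H1 & H2 & ->).
    simpl in Hc. rewrite !nL_compose, !nM_compose in Hc. simpl in Hc.
    pose proof (isA_count _ HA). pose proof (isA_count _ H2).
    assert (HY: isA (compose Au (compose X Ad'))) by (apply IH; auto; lia).
    simpl. rewrite !compose_assoc.
    replace (compose A (compose Au (compose X (compose Ad' (compose A'' (CLam Hole))))))
      with (compose (compose A (compose (compose Au (compose X Ad')) A'')) (CLam Hole))
      by (rewrite !compose_assoc; reflexivity).
    constructor; [|constructor]. apply isA_compose; auto. apply isA_compose; auto.
Qed.

Lemma insertion : forall Au Ad A g, isAup Au -> isAdown Ad -> isA (compose Au Ad) -> isA A ->
  isA (compose Au (CAppL (compose A (CLam Ad)) g)).
Proof.
  intros. pose proof (isA_count _ H1). rewrite nL_compose, nM_compose in H3.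
  pose proof (insertion_gen Au H Ad H0 ltac:(lia) (CAppL (compose A (CLam Hole)) g)).
  simpl in H4. rewrite compose_assoc in H4. simpl in H4. apply H4.
  constructor; auto. constructor.
Qed.

Lemma isA_isE : forall A, isA A -> isE A.
Proof. intros. rewrite <- (compose_hole_r A). apply isE_ans; auto; constructor. Qed.

Lemma isAup_isE : forall A, isAup A -> isE A.
Proof. induction 1. constructor. apply isE_appl. apply isE_ans; auto. Qed.

Lemma isE_compose : forall E1, isE E1 -> forall E2, isE E2 -> isE (compose E1 E2).
Proof.
  induction 1; intros; simpl; auto.
  - constructor; auto.
  - rewrite compose_assoc. apply isE_ans; auto.
  - rewrite compose_assoc. simpl. apply isE_need; auto.
Qed.

Lemma ctx_app_eq : forall A B X Y, compose A B = compose X Y ->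
  (exists Z, X = compose A Z /\ B = compose Z Y) \/
  (exists Z, A = compose X Z /\ Y = compose Z B).
Proof.
  induction A; intros B X Y H; simpl in H.
  - left. exists X. auto.
  - destruct X; simpl in H; try discriminate.
    + right. exists (CAppL A t). auto.
    + injection H as H <-. destruct (IHA _ _ _ H) as [(Z&->&->)|(Z&->&->)].
      * left. exists Z. auto.
      * right. exists Z. auto.
  - destruct X; simpl in H; try discriminate.
    + right. exists (CAppR t A). auto.
    + injection H as <- H. destruct (IHA _ _ _ H) as [(Z&->&->)|(Z&->&->)].
      * left. exists Z. auto.
      * right. exists Z. auto.
  - destruct X; simpl in H; try discriminate.
    + right. exists (CLam A). auto.
    + injection H as H. destruct (IHA _ _ _ H) as [(Z&->&->)|(Z&->&->)].
      * left. exists Z. auto.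
      * right. exists Z. auto.
Qed.

Lemma isA_prefix : forall C, isA C -> forall X Y, C = compose X Y -> isE X.
Proof.
  induction 1 as [|A1 A2 e H1 IH1 H2 IH2]; intros X Y HC.
  - destruct X; simpl in HC; try discriminate. constructor.
  - destruct X; simpl in HC; try discriminate. constructor.
    injection HC as HC <-.
    destruct (ctx_app_eq _ _ _ _ HC) as [(Z&->&HZ)|(Z&->&HZ)].
    + destruct Z; simpl in HZ; try discriminate.
      * rewrite compose_hole_r. constructor. eapply IH1. symmetry. apply compose_hole_r.
      * injection HZ as HZ.
        replace (CAppL (compose A1 (CLam Z)) e) with
          (compose (CAppL (compose A1 (CLam Hole)) e) Z)
          by (simpl; rewrite compose_assoc; reflexivity).
        apply isE_ans. constructor; auto; constructor. eapply IH2; eauto.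
    + constructor. eapply IH1; eauto.
Qed.

Lemma isAup_prefix : forall C, isAup C -> forall X Y, C = compose X Y -> isE X.
Proof.
  induction 1 as [|A Au e HA HAu IH]; intros X Y HC.
  - destruct X; simpl in HC; try discriminate. constructor.
  - destruct X; simpl in HC; try discriminate. constructor.
    injection HC as HC <-. constructor.
    destruct (ctx_app_eq _ _ _ _ HC) as [(Z&->&HZ)|(Z&->&HZ)].
    + apply isE_ans; auto. eapply IH; eauto.
    + eapply isA_prefix; eauto.
Qed.

Lemma isE_prefix : forall C, isE C -> forall X Y, C = compose X Y -> isE X.
Proof.
  induction 1; intros X Y HC.
  - destruct X; simpl in HC; try discriminate. constructor.
  - destruct X; simpl in HC; try discriminate. constructor.
    injection HC as HC <-. constructor. eauto.
  - destruct (ctx_app_eq _ _ _ _ HC) as [(Z&->&HZ)|(Z&->&HZ)].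
    + apply isE_ans; eauto.
    + eapply isA_prefix; eauto.
  - destruct (ctx_app_eq _ _ _ _ HC) as [(Z&->&HZ)|(Z&->&HZ)].
    + destruct Z; simpl in HZ; try discriminate.
      * rewrite compose_hole_r. eapply isAup_prefix; eauto. symmetry; apply compose_hole_r.
      * injection HZ as <- HZ. apply isE_need; eauto.
    + eapply isAup_prefix; eauto.
Qed.

Lemma isE_map : forall f, structural f -> forall C, isE C -> forall l, isE (mapc f l C).
Proof.
  intros f Hf C HC. induction HC; intros l; simpl.
  - constructor.
  - constructor; auto.
  - rewrite compose_map by auto. apply isE_ans; auto.
    eapply isA_kinds; eauto. apply kinds_map.
  - rewrite compose_map by auto. simpl. rewrite plug_map by auto.
    rewrite lam_need_map by auto. apply isE_need; auto.
    + eapply isAup_kinds; [exact H|]; apply kinds_map.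
    + eapply isA_kinds; [exact H0|]; apply kinds_map.
    + eapply isAdown_kinds; [exact H1|]; apply kinds_map.
    + eapply isA_kinds; [exact H2|]. rewrite !kinds_compose, !kinds_map. reflexivity.
Qed.

Lemma redex_map : forall f, structural f -> forall Au A1 Ad E A2 v c,
  f c (redex Au A1 Ad E A2 v) =
  redex (mapc f c Au) (mapc f (c + depth Au) A1)
        (mapc f (S (c + depth Au + depth A1)) Ad)
        (mapc f (S (c + depth Au + depth A1) + depth Ad) E)
        (mapc f (c + depth Au) A2) (f (c + depth Au + depth A2) v).
Proof.
  intros f Hf. destruct Hf as [HL [HA HV]] eqn:Hf'. intros. unfold redex.
  rewrite plug_map by auto. rewrite HA. rewrite !plug_map by auto.
  rewrite lam_need_map by auto. reflexivity.
Qed.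

Lemma shift_ctx_perm : forall A2 d k1 c1 j,
  mapc (shift d) (c1 + k1 + j) (mapc (shift k1) j A2) =
  mapc (shift k1) j (mapc (shift d) (c1 + j) A2).
Proof.
  induction A2; intros; simpl; f_equal; auto;
  try (rewrite (shift_shift_perm t k1 d (c1 + j) j) by lia; f_equal; lia).
  replace (S (c1 + k1 + j)) with (c1 + k1 + S j) by lia.
  replace (S (c1 + j)) with (c1 + S j) by lia. auto.
Qed.

Lemma subst_ctx_perm : forall A2 u k1 c1 j,
  mapc (fun k => subst k u) (c1 + k1 + j) (mapc (shift k1) j A2) =
  mapc (shift k1) j (mapc (fun k => subst k u) (c1 + j) A2).
Proof.
  induction A2; intros; simpl; f_equal; auto;
  try (rewrite (shift_subst_lo t k1 j (c1 + j) u) by lia; f_equal; lia).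
  replace (S (c1 + k1 + j)) with (c1 + k1 + S j) by lia.
  replace (S (c1 + j)) with (c1 + S j) by lia. auto.
Qed.

Lemma body_map : forall f, structural f -> forall Ad E l,
  f (S l) (plug Ad (plug E (Var (depth E + depth Ad)))) =
  plug (mapc f (S l) Ad) (plug (mapc f (S l + depth Ad) E)
     (Var (depth (mapc f (S l + depth Ad) E) + depth (mapc f (S l) Ad)))).
Proof.
  intros f Hf. pose proof Hf as [HL [HA HV]]. intros.
  rewrite !plug_map by auto. rewrite !depth_map. rewrite HV by lia. reflexivity.
Qed.

Lemma shift_contractum : forall Au A1 Ad E A2 v d c,
  shift d c (contractum Au A1 Ad E A2 v) =
  contractum (mapc (shift d) c Au) (mapc (shift d) (c + depth Au) A1)
        (mapc (shift d) (S (c + depth Au + depth A1)) Ad)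
        (mapc (shift d) (S (c + depth Au + depth A1) + depth Ad) E)
        (mapc (shift d) (c + depth Au) A2) (shift d (c + depth Au + depth A2) v).
Proof.
  intros. pose proof (shift_structural d) as Hf. unfold contractum.
  rewrite !depth_map.
  rewrite !plug_map by auto. rewrite !shift_ctx_map.
  rewrite depth_map.
  pose proof (shift_ctx_perm A2 d (depth A1) (c + depth Au) 0) as HP.
  rewrite !Nat.add_0_r in HP. rewrite HP.
  f_equal. f_equal. f_equal.
  rewrite shift_subst_hi by lia. rewrite Nat.sub_0_r. f_equal.
  - rewrite (shift_shift_perm v (depth A1) d (c + depth Au + depth A2) (depth A2)) by lia.
    f_equal. lia.
  - replace (S (c + depth Au + depth A1 + depth A2)) with (depth A2 + S (c + depth Au + depth A1)) by lia.
    rewrite <- shift_shift_perm by lia. f_equal.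
    rewrite body_map by auto. rewrite !depth_map. reflexivity.
Qed.

Lemma subst_contractum : forall Au A1 Ad E A2 v u c,
  subst c u (contractum Au A1 Ad E A2 v) =
  contractum (mapc (fun k => subst k u) c Au) (mapc (fun k => subst k u) (c + depth Au) A1)
        (mapc (fun k => subst k u) (S (c + depth Au + depth A1)) Ad)
        (mapc (fun k => subst k u) (S (c + depth Au + depth A1) + depth Ad) E)
        (mapc (fun k => subst k u) (c + depth Au) A2) (subst (c + depth Au + depth A2) u v).
Proof.
  intros. pose proof (subst_structural u) as Hf. unfold contractum.
  rewrite !depth_map.
  rewrite (plug_map _ Hf). rewrite (plug_map _ Hf). rewrite (plug_map _ Hf).
  rewrite !shift_ctx_map. rewrite depth_map.
  pose proof (subst_ctx_perm A2 u (depth A1) (c + depth Au) 0) as HP. rewrite !Nat.add_0_r in HP. rewrite HP.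
  f_equal. f_equal. f_equal.
  pose proof (subst_subst (shift (depth A2) 1 (plug Ad (plug E (Var (depth E + depth Ad)))))
    (shift (depth A1) (depth A2) v) u (c + depth Au + depth A1 + depth A2) 0) as HS.
  rewrite Nat.add_0_r in HS. rewrite HS. clear HS. f_equal.
  - rewrite (shift_subst_lo v (depth A1) (depth A2) (c + depth Au + depth A2) u) by lia.
    f_equal. lia.
  - replace (S (c + depth Au + depth A1 + depth A2)) with (depth A2 + S (c + depth Au + depth A1)) by lia.
    rewrite <- shift_subst_lo by lia. f_equal.
    rewrite (body_map _ Hf). rewrite !depth_map. reflexivity.
Qed.

Lemma beta_need_map : forall f, structural f ->
  (forall Au A1 Ad E A2 v c, f c (contractum Au A1 Ad E A2 v) =
    contractum (mapc f c Au) (mapc f (c + depth Au) A1)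
        (mapc f (S (c + depth Au + depth A1)) Ad)
        (mapc f (S (c + depth Au + depth A1) + depth Ad) E)
        (mapc f (c + depth Au) A2) (f (c + depth Au + depth A2) v)) ->
  forall t t', beta_need t t' -> forall c, beta_need (f c t) (f c t').
Proof.
  intros f Hf Hc t t' H c. destruct H.
  rewrite redex_map by auto. rewrite Hc. apply beta_need_intro.
  - eapply isAup_kinds; [exact H|]; apply kinds_map.
  - eapply isA_kinds; [exact H0|]; apply kinds_map.
  - eapply isAdown_kinds; [exact H1|]; apply kinds_map.
  - apply isE_map; auto.
  - eapply isA_kinds; [exact H3|]; apply kinds_map.
  - destruct H4 as [b ->]. destruct Hf as [HL _]. rewrite HL. eexists; eauto.
  - eapply isA_kinds; [exact H5|]. rewrite !kinds_compose, !kinds_map. reflexivity.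
Qed.

Lemma beta_need_shift : forall t t', beta_need t t' -> forall d c,
  beta_need (shift d c t) (shift d c t').
Proof. intros. apply (beta_need_map (shift d)); auto using shift_structural, shift_contractum. Qed.

Lemma beta_need_subst : forall t t', beta_need t t' -> forall u c,
  beta_need (subst c u t) (subst c u t').
Proof.
  intros. apply (beta_need_map (fun k => subst k u)); auto using subst_structural.
  intros. apply subst_contractum.
Qed.

Inductive P : nat -> term -> term -> Prop :=
| P_refl : forall t, P 0 t t
| P_app : forall n1 n2 a b a' b', P n1 a a' -> P n2 b b' -> P (n1 + n2) (App a b) (App a' b')
| P_lam : forall n a a', P n a a' -> P n (Lam a) (Lam a')
| P_beta : forall n t c u, beta_need t c -> P n c u -> P (S n) t u.

Definition PP t u := exists n, P n t u.

Inductive Fr : ctx -> ctx -> Prop :=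
| Fr_hole : Fr Hole Hole
| Fr_L : forall C C' e e', Fr C C' -> PP e e' -> Fr (CAppL C e) (CAppL C' e')
| Fr_R : forall C C' e e', Fr C C' -> PP e e' -> Fr (CAppR e C) (CAppR e' C')
| Fr_M : forall C C', Fr C C' -> Fr (CLam C) (CLam C').

Lemma PP_refl : forall t, PP t t.
Proof. intros; exists 0; constructor. Qed.
Lemma PP_app : forall a b a' b', PP a a' -> PP b b' -> PP (App a b) (App a' b').
Proof. intros a b a' b' [n1 H1] [n2 H2]. eexists; constructor; eauto. Qed.
Lemma PP_lam : forall a a', PP a a' -> PP (Lam a) (Lam a').
Proof. intros a a' [n H]. eexists; constructor; eauto. Qed.
Lemma PP_beta : forall t c u, beta_need t c -> PP c u -> PP t u.
Proof. intros t c u H [n H1]. eexists; eapply P_beta; eauto. Qed.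

Lemma Fr_refl : forall C, Fr C C.
Proof. induction C; constructor; auto using PP_refl. Qed.
Lemma Fr_compose : forall A A', Fr A A' -> forall B B', Fr B B' -> Fr (compose A B) (compose A' B').
Proof. induction 1; intros; simpl; try constructor; auto. Qed.
Lemma Fr_depth : forall C C', Fr C C' -> depth C = depth C'.
Proof. induction 1; simpl; auto. Qed.
Lemma Fr_kinds : forall C C', Fr C C' -> kinds C = kinds C'.
Proof. induction 1; simpl; f_equal; auto. Qed.
Lemma Fr_plug : forall C C', Fr C C' -> forall s s', PP s s' -> PP (plug C s) (plug C' s').
Proof. induction 1; intros; simpl; auto using PP_app, PP_lam. Qed.

Lemma P_shift : forall n t u, P n t u -> forall d c, P n (shift d c t) (shift d c u).
Proof.
  induction 1; intros; simpl.
  - constructor.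
  - constructor; auto.
  - constructor; auto.
  - eapply P_beta; eauto. apply beta_need_shift; auto.
Qed.

Lemma PP_shift : forall t u d c, PP t u -> PP (shift d c t) (shift d c u).
Proof. intros t u d c [n H]. exists n. apply P_shift; auto. Qed.

Lemma PP_subst_refl : forall t w w' k, PP w w' -> PP (subst k w t) (subst k w' t).
Proof.
  induction t; intros; simpl.
  - destruct (n =? k). apply PP_shift; auto. destruct (k <? n); apply PP_refl.
  - apply PP_lam; auto.
  - apply PP_app; auto.
Qed.

Lemma PP_subst : forall n t u, P n t u -> forall w w' k, PP w w' -> PP (subst k w t) (subst k w' u).
Proof.
  induction 1; intros; simpl.
  - apply PP_subst_refl; auto.
  - apply PP_app; auto.
  - apply PP_lam; auto.
  - eapply PP_beta. apply beta_need_subst; eauto. auto.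
Qed.

Lemma PP_subst2 : forall t u w w' k, PP t u -> PP w w' -> PP (subst k w t) (subst k w' u).
Proof. intros t u w w' k [n H] Hw. eapply PP_subst; eauto. Qed.

Lemma Fr_map : forall f, (forall l a b, PP a b -> PP (f l a) (f l b)) ->
  forall C C', Fr C C' -> forall l, Fr (mapc f l C) (mapc f l C').
Proof. intros f Hf. induction 1; intros; simpl; constructor; auto. Qed.

Lemma contractum_PP : forall Au A1 Ad E A2 v Au' A1' Ad' E' A2' v',
  Fr Au Au' -> Fr A1 A1' -> Fr Ad Ad' -> Fr E E' -> Fr A2 A2' -> PP v v' ->
  PP (contractum Au A1 Ad E A2 v) (contractum Au' A1' Ad' E' A2' v').
Proof.
  intros. unfold contractum.
  rewrite (Fr_depth _ _ H0), (Fr_depth _ _ H3), (Fr_depth _ _ H1), (Fr_depth _ _ H2).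
  apply Fr_plug; auto. apply Fr_plug; auto. apply Fr_plug.
  - rewrite !shift_ctx_map. apply Fr_map; auto. intros; apply PP_shift; auto.
  - apply PP_subst2. apply PP_shift. apply Fr_plug; auto. apply Fr_plug; auto. apply PP_refl.
    apply PP_shift; auto.
Qed.

Scheme pr_mut := Induction for pr Sort Prop
with prc_mut := Induction for pr_ctx Sort Prop.

Lemma pr_PP : forall t u, pr t u -> PP t u.
Proof.
  apply (pr_mut (fun t u _ => PP t u) (fun C C' _ => Fr C C')); intros.
  - apply PP_refl.
  - eapply PP_beta. apply beta_need_intro; eauto.
    apply contractum_PP; auto.
  - apply PP_app; auto.
  - apply PP_lam; auto.
  - constructor.
  - constructor; auto. apply Fr_compose; auto. constructor; auto.
  - constructor; auto. apply Fr_compose; auto.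
  - apply Fr_compose; auto. constructor; auto.
  - constructor; auto.
  - apply Fr_compose; auto.
  - apply Fr_compose; auto. constructor; auto.
    apply Fr_plug; auto. unfold lam_need. apply PP_lam. apply Fr_plug; auto. apply Fr_plug; auto.
    rewrite (Fr_depth _ _ H1), (Fr_depth _ _ H2). apply PP_refl.
Qed.

Inductive star : term -> term -> Prop :=
| star_refl : forall t, star t t
| star_step : forall a b c, std_step a b -> star b c -> star a c.

Lemma star_trans : forall a b c, star a b -> star b c -> star a c.
Proof. induction 1; intros; auto. econstructor; eauto. Qed.

Lemma std_lift : forall O x y, isE O -> std_step x y -> std_step (plug O x) (plug O y).
Proof.
  intros O x y HO H. destruct H. rewrite <- !plug_compose. constructor; auto.
  apply isE_compose; auto.
Qed.

Lemma star_lift : forall O x y, isE O -> star x y -> star (plug O x) (plug O y).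
Proof. induction 2; econstructor; eauto using std_lift. Qed.

Lemma root_step : forall t c, beta_need t c -> std_step t c.
Proof. intros. change (std_step (plug Hole t) (plug Hole c)). constructor; auto. constructor. Qed.

Fixpoint tsize (t : term) : nat :=
  match t with Var _ => 1 | Lam b => S (tsize b) | App a b => S (tsize a + tsize b) end.

Lemma tsize_plug_le : forall C s, tsize s <= tsize (plug C s).
Proof. induction C; intros; simpl; auto; specialize (IHC s); lia. Qed.

Lemma I_Lam : forall n t u, P n t u -> forall b, u = Lam b -> forall O, isE O ->
  exists b' m, star (plug O t) (plug O (Lam b')) /\ P m b' b /\ m <= n.
Proof.
  induction 1; intros bb Hu O HO; subst; try discriminate.
  - exists bb, 0. split; [constructor|]. split; [constructor|lia].
  - injection Hu as ->. exists a, n. split; [constructor|]. auto.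
  - destruct (IHP bb eq_refl O HO) as (b' & m & H1 & H2 & H3).
    exists b', m. split; [|split; auto; lia].
    econstructor. apply std_lift; auto. apply root_step; eauto. auto.
Qed.

Lemma I_Var : forall n t u, P n t u -> forall k, u = Var k -> forall O, isE O ->
  star (plug O t) (plug O (Var k)).
Proof.
  induction 1; intros kk Hu O HO; subst; try discriminate.
  all: try constructor.
  econstructor. apply std_lift; auto. apply root_step; eauto. eauto.
Qed.

Lemma isE_root : forall E, isE E -> E = Hole \/ (exists E' e, E = CAppL E' e) \/ (exists e E', E = CAppR e E').
Proof.
  induction 1; auto.
  - right; left; eauto.
  - destruct H; auto. right; left; simpl; eauto.
  - destruct H; simpl; [right; right; eauto | right; left; eauto].
Qed.

Lemma isE_plug_lam : forall E s b, isE E -> plug E s = Lam b -> E = Hole.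
Proof.
  intros. destruct (isE_root E H) as [->|[(E'&e&->)|(e&E'&->)]]; auto; discriminate.
Qed.

Lemma lam_need_PP : forall Ad Ad' E E', Fr Ad Ad' -> Fr E E' -> PP (lam_need Ad E) (lam_need Ad' E').
Proof.
  intros. unfold lam_need. apply PP_lam. apply Fr_plug; auto. apply Fr_plug; auto.
  rewrite (Fr_depth _ _ H), (Fr_depth _ _ H0). apply PP_refl.
Qed.

Definition Hneed (O Au Ad : ctx) : Prop :=
  forall Au2 Ad2 A2 g E2, kinds Au2 = kinds Au -> kinds Ad2 = kinds Ad -> isA A2 -> isE E2 ->
  isE (compose O (compose Au2 (CAppL (compose A2 (CLam (compose Ad2 E2))) g))).

Definition HAd (O Ad : ctx) : Prop :=
  forall Ad2 E2, kinds Ad2 = kinds Ad -> isE E2 -> isE (compose O (compose Ad2 E2)).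

Lemma Hneed_init : forall O Au Ad, isE O -> isAup Au -> isAdown Ad -> isA (compose Au Ad) -> Hneed O Au Ad.
Proof.
  intros O Au Ad HO HAu HAd HA. intros Au2 Ad2 A2 g E2 K1 K2 HA2 HE2.
  apply isE_compose; auto.
  assert (HAu2 : isAup Au2) by (eapply isAup_kinds; eauto).
  assert (HAd2 : isAdown Ad2) by (eapply isAdown_kinds; eauto).
  assert (HA' : isA (compose Au2 Ad2)).
  { eapply isA_kinds; [exact HA|]. rewrite !kinds_compose. congruence. }
  pose proof (insertion Au2 Ad2 A2 g HAu2 HAd2 HA' HA2) as HI.
  replace (compose Au2 (CAppL (compose A2 (CLam (compose Ad2 E2))) g))
    with (compose (compose Au2 (CAppL (compose A2 (CLam Ad2)) g)) E2).
  - apply isE_ans; auto.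
  - rewrite compose_assoc. simpl. rewrite compose_assoc. reflexivity.
Qed.

Definition I_need_st (n : nat) (t u : term) : Prop :=
  forall O Au A Ad E1 s, isE O -> isAup Au -> isA A -> isAdown Ad -> isE E1 -> Hneed O Au Ad ->
  u = plug Au (App (plug A (lam_need Ad E1)) s) -> P n t u ->
  exists Au' A' Ad' E1' s' m,
    star (plug O t) (plug O (plug Au' (App (plug A' (lam_need Ad' E1')) s'))) /\
    Fr Au' Au /\ Fr A' A /\ Fr Ad' Ad /\ Fr E1' E1 /\ isE E1' /\ P m s' s /\ m <= n.

Definition I_E_st (n : nat) (t u : term) : Prop :=
  forall O E s, isE O -> isE E -> u = plug E s -> P n t u ->
  exists E' s' m, star (plug O t) (plug O (plug E' s')) /\ isE E' /\ Fr E' E /\ P m s' s /\ m <= n.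

Definition I_Ad_st (n : nat) (t u : term) : Prop :=
  forall O Ad X, isAdown Ad -> HAd O Ad -> u = plug Ad X -> P n t u ->
  exists Ad' X' m, star (plug O t) (plug O (plug Ad' X')) /\ Fr Ad' Ad /\ P m X' X /\ m <= n.

Definition All3 n t u := I_need_st n t u /\ I_E_st n t u /\ I_Ad_st n t u.

Lemma Fr_isA : forall C C', Fr C C' -> isA C' -> isA C.
Proof. intros. eapply isA_kinds; [eassumption|]. apply Fr_kinds; auto. Qed.
Lemma Fr_isAup : forall C C', Fr C C' -> isAup C' -> isAup C.
Proof. intros. eapply isAup_kinds; [eassumption|]. apply Fr_kinds; auto. Qed.
Lemma Fr_isAdown : forall C C', Fr C C' -> isAdown C' -> isAdown C.
Proof. intros. eapply isAdown_kinds; [eassumption|]. apply Fr_kinds; auto. Qed.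

Lemma P_PP : forall n a b, P n a b -> PP a b.
Proof. intros; eexists; eauto. Qed.


Ltac pc := do 3 (repeat rewrite plug_compose in *; simpl in *).

Lemma I_need_proof : forall n t u,
  (forall n', n' < n -> forall t u, All3 n' t u) ->
  (forall n' t' u', n' <= n -> tsize u' < tsize u -> All3 n' t' u') ->
  I_need_st n t u.
Proof.
  intros n t u IHn IH O Au A Ad E1 s HO HAu HA HAdw HE1 HNd Hu HP.
  revert IHn IH Hu. destruct HP as [t0 | n1 n2 a b a' b' Ha Hb | n0 a a' Ha | n0 t0 c u0 Hbeta Hc];
    intros IHn IH Hu.
  - exists Au, A, Ad, E1, s, 0. subst. repeat split; auto using Fr_refl; try constructor.
  - destruct HAu as [|A' Au' e HA' HAu'].
    + simpl in Hu. injection Hu as Ha' Hb'. subst a' b'.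
      assert (HO1 : isE (compose O (CAppL Hole b))).
      { pose proof (HNd Hole Ad Hole b Hole eq_refl eq_refl isA_hole isE_hole) as H.
        eapply isE_prefix; [exact H|]. rewrite compose_assoc. simpl. reflexivity. }
      destruct (IH n1 a (plug A (lam_need Ad E1)) ltac:(lia) ltac:(simpl; lia)) as [_ [IE _]].
      destruct (IE _ A (lam_need Ad E1) HO1 (isA_isE _ HA) eq_refl Ha)
        as (A0 & s1 & m1 & S1 & HA0 & FA0 & Ps1 & Hm1).
      assert (HA0' : isA A0) by (eapply Fr_isA; eauto).
      assert (HO2 : isE (compose O (CAppL A0 b))).
      { pose proof (HNd Hole Ad A0 b Hole eq_refl eq_refl HA0' isE_hole) as H.
        eapply isE_prefix; [exact H|]. rewrite compose_assoc. simpl. reflexivity. }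
      destruct (I_Lam _ _ _ Ps1 _ eq_refl _ HO2) as (b1 & m2 & S2 & Pb1 & Hm2).
      assert (HAdO3 : HAd (compose O (CAppL (compose A0 (CLam Hole)) b)) Ad).
      { intros Ad2 E2 K HE2. pose proof (HNd Hole Ad2 A0 b E2 eq_refl K HA0' HE2) as H.
        rewrite compose_assoc. simpl. rewrite compose_assoc. simpl. exact H. }
      assert (Hs3 : tsize (plug Ad (plug E1 (Var (depth E1 + depth Ad)))) < tsize (App (plug A (lam_need Ad E1)) s)).
      { simpl. pose proof (tsize_plug_le A (lam_need Ad E1)). unfold lam_need in *. simpl in *. lia. }
      destruct (IH m2 b1 _ ltac:(lia) Hs3) as [_ [_ IAd]].
      destruct (IAd _ Ad (plug E1 (Var (depth E1 + depth Ad))) HAdw HAdO3 eq_refl Pb1) as (Ad0 & X1 & m3 & S3 & FAd0 & PX1 & Hm3).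
      assert (HO4 : isE (compose (compose O (CAppL (compose A0 (CLam Hole)) b)) Ad0)).
      { pose proof (HAdO3 Ad0 Hole (Fr_kinds _ _ FAd0) isE_hole) as H. rewrite compose_hole_r in H. exact H. }
      assert (Hs4 : tsize (plug E1 (Var (depth E1 + depth Ad))) < tsize (App (plug A (lam_need Ad E1)) s)).
      { pose proof (tsize_plug_le Ad (plug E1 (Var (depth E1 + depth Ad)))). lia. }
      destruct (IH m3 X1 _ ltac:(lia) Hs4) as [_ [IE2 _]].
      destruct (IE2 _ E1 (Var (depth E1 + depth Ad)) HO4 HE1 eq_refl PX1) as (E10 & s4 & m4 & S4 & HE10 & FE10 & Ps4 & Hm4).
      assert (HO5 : isE (compose (compose (compose O (CAppL (compose A0 (CLam Hole)) b)) Ad0) E10)).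
      { pose proof (HAdO3 Ad0 E10 (Fr_kinds _ _ FAd0) HE10) as H. rewrite compose_assoc. exact H. }
      pose proof (I_Var _ _ _ Ps4 _ eq_refl _ HO5) as S5.
      exists Hole, A0, Ad0, E10, b, n2. repeat split; auto; try constructor; try lia.
      unfold lam_need. rewrite (Fr_depth _ _ FAd0), (Fr_depth _ _ FE10).
      pc.
      eapply star_trans; [exact S1|]. eapply star_trans; [exact S2|].
      eapply star_trans; [exact S3|]. eapply star_trans; [exact S4|]. exact S5.
    + simpl in Hu. injection Hu as Ha' Hb'. subst a' b'.
      set (X := App (plug A (lam_need Ad E1)) s) in *.
      assert (HN2 : forall A'0, Fr A'0 A' -> Hneed (compose O (CAppL A'0 b)) Au' Ad).
      { intros A'0 FA Au2 Ad2 A2 g E2 K1 K2 HA2 HE2.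
        pose proof (HNd (CAppL (compose A'0 Au2) b) Ad2 A2 g E2) as H.
        rewrite compose_assoc. simpl. simpl in H. rewrite compose_assoc in H. apply H; auto.
        simpl. rewrite !kinds_compose, K1, (Fr_kinds _ _ FA). reflexivity. }
      assert (HO1 : isE (compose O (CAppL Hole b))).
      { pose proof (HN2 A' (Fr_refl A') Au' Ad Hole b Hole eq_refl eq_refl isA_hole isE_hole) as H.
        eapply isE_prefix; [exact H|]. rewrite !compose_assoc. simpl. reflexivity. }
      destruct (IH n1 a (plug (compose A' Au') X) ltac:(lia) ltac:(simpl; lia)) as [_ [IE _]].
      destruct (IE _ A' (plug Au' X) HO1 (isA_isE _ HA') (plug_compose _ _ _) Ha)
        as (A'0 & s1 & m1 & S1 & HA0 & FA0 & Ps1 & Hm1).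
      assert (Hs2 : tsize (plug Au' X) < tsize (App (plug (compose A' Au') X) e)).
      { rewrite plug_compose. pose proof (tsize_plug_le A' (plug Au' X)). simpl. lia. }
      destruct (IH m1 s1 (plug Au' X) ltac:(lia) Hs2) as [IN _].
      assert (HO2 : isE (compose O (CAppL A'0 b))).
      { pose proof (HN2 A'0 FA0 Au' Ad Hole b Hole eq_refl eq_refl isA_hole isE_hole) as H.
        eapply isE_prefix; [exact H|]. rewrite !compose_assoc. simpl. reflexivity. }
      destruct (IN _ Au' A Ad E1 s HO2 HAu' HA HAdw HE1 (HN2 A'0 FA0) eq_refl Ps1)
        as (Au'0 & A0 & Ad0 & E10 & s' & m & S2 & F1 & F2 & F3 & F4 & HE10 & Ps' & Hm).
      exists (CAppL (compose A'0 Au'0) b), A0, Ad0, E10, s', m.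
      repeat split; auto; try lia.
      * pc. eapply star_trans; [exact S1|]. exact S2.
      * constructor. apply Fr_compose; auto. eapply P_PP; eauto.
  - destruct HAu; simpl in Hu; discriminate.
  - destruct (IHn n0 ltac:(lia) c u0) as [IN _].
    destruct (IN O Au A Ad E1 s HO HAu HA HAdw HE1 HNd Hu Hc) as (Au' & A' & Ad' & E1' & s' & m & HS & R).
    exists Au', A', Ad', E1', s', m. split.
    + econstructor. apply std_lift; auto. apply root_step; eauto. exact HS.
    + intuition lia.
Qed.

Lemma I_E_proof : forall n t u,
  (forall n', n' < n -> forall t u, All3 n' t u) ->
  (forall n' t' u', n' <= n -> tsize u' < tsize u -> All3 n' t' u') ->
  I_need_st n t u -> I_E_st n t u.
Proof.
  intros n t u IHn IH HN O E s HO HE Hu HP.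
  revert IHn IH HN Hu. destruct HP as [t0 | n1 n2 a b a' b' Ha Hb | n0 a a' Ha | n0 t0 c u0 Hbeta Hc];
    intros IHn IH HN Hu.
  - exists E, s, 0. subst. repeat split; auto using Fr_refl; constructor.
  - revert s Hu. induction HE as [|E1 e HE1 _|A E1 HA HE1 IHE|Au A Ad E1 E2 HAu HA HAd HE1 _ HE2 _ HAA];
      intros s Hu.
    + exists Hole, (App a b), (n1 + n2). simpl in *. subst. repeat split; try constructor; auto.
    + simpl in Hu. injection Hu as Ha' Hb'. subst a' b'.
      destruct (IH n1 a (plug E1 s) ltac:(lia) ltac:(simpl; lia)) as [_ [IE _]].
      assert (HO1 : isE (compose O (CAppL Hole b))) by (apply isE_compose; auto; repeat constructor).
      destruct (IE _ E1 s HO1 HE1 eq_refl Ha) as (E10 & s0 & m & S1 & HE10 & F1 & Ps0 & Hm).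
      exists (CAppL E10 b), s0, m. repeat split; auto; try lia.
      * pc. exact S1.
      * constructor; auto.
      * constructor; auto. eapply P_PP; eauto.
    + destruct HA as [|A1 A2 e HA1 HA2].
      * simpl in *. apply IHE. auto.
      * pc. injection Hu as Ha' Hb'. subst a' b'.
        set (Y := Lam (plug A2 (plug E1 s))) in *.
        destruct (IH n1 a (plug A1 Y) ltac:(lia) ltac:(simpl; lia)) as [_ [IE _]].
        assert (HO1 : isE (compose O (CAppL Hole b))) by (apply isE_compose; auto; repeat constructor).
        destruct (IE _ A1 Y HO1 (isA_isE _ HA1) eq_refl Ha) as (A10 & s1 & m1 & S1 & HA10 & F1 & Ps1 & Hm1).
        assert (HA10' : isA A10) by (eapply Fr_isA; eauto).
        assert (HO2 : isE (compose O (CAppL A10 b))).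
        { apply isE_compose; auto. constructor. apply isA_isE; auto. }
        destruct (I_Lam _ _ _ Ps1 _ eq_refl _ HO2) as (b1 & m2 & S2 & Pb1 & Hm2).
        assert (Hs3 : tsize (plug (compose A2 E1) s) < tsize (App (plug A1 Y) e)).
        { rewrite plug_compose. pose proof (tsize_plug_le A1 Y). unfold Y in *. simpl in *. lia. }
        destruct (IH m2 b1 _ ltac:(lia) Hs3) as [_ [IE3 _]].
        assert (HO3 : isE (compose O (CAppL (compose A10 (CLam Hole)) b))).
        { apply isE_compose; auto. apply isA_isE. constructor; auto. constructor. }
        destruct (IE3 _ (compose A2 E1) s HO3 (isE_ans _ _ HA2 HE1) eq_refl
           ltac:(rewrite plug_compose; exact Pb1)) as (E3 & s3 & m3 & S3 & HE3 & F3 & Ps3 & Hm3).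
        exists (compose (CAppL (compose A10 (CLam Hole)) b) E3), s3, m3.
        repeat split; try lia.
        -- pc. eapply star_trans; [exact S1|]. eapply star_trans; [exact S2|]. exact S3.
        -- apply isE_ans; auto. constructor; auto. constructor.
        -- simpl. rewrite !compose_assoc. simpl. constructor. apply Fr_compose; auto.
           constructor. auto. eapply P_PP; eauto.
        -- auto.
    + set (side := plug A (lam_need Ad E1)) in *.
      assert (Hu' : App a' b' = plug Au (App side (plug E2 s))) by (rewrite Hu, plug_compose; reflexivity).
      destruct (HN O Au A Ad E1 (plug E2 s) HO HAu HA HAd HE1 (Hneed_init O Au Ad HO HAu HAd HAA) Hu'
         (P_app _ _ _ _ _ _ Ha Hb)) as (Au0 & A0 & Ad0 & E10 & s0 & m & S1 & FAu & FA & FAd & FE1 & HE10 & Ps0 & Hm).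
      assert (Hs : tsize (plug E2 s) < tsize (App a' b')).
      { rewrite Hu'. pose proof (tsize_plug_le Au (App side (plug E2 s))). simpl in *. lia. }
      destruct (IH m s0 _ ltac:(lia) Hs) as [_ [IE _]].
      set (side0 := plug A0 (lam_need Ad0 E10)).
      assert (HAu0 : isAup Au0) by (eapply Fr_isAup; eauto).
      assert (HA0 : isA A0) by (eapply Fr_isA; eauto).
      assert (HAd0 : isAdown Ad0) by (eapply Fr_isAdown; eauto).
      assert (HAA0 : isA (compose Au0 Ad0)).
      { eapply isA_kinds; [exact HAA|]. rewrite !kinds_compose, (Fr_kinds _ _ FAu), (Fr_kinds _ _ FAd). reflexivity. }
      assert (HO' : isE (compose O (compose Au0 (CAppR side0 Hole)))).
      { apply isE_compose; auto. apply isE_need; auto; constructor. }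
      destruct (IE _ E2 s HO' HE2 eq_refl Ps0) as (E20 & s2 & m2 & S2 & HE20 & F2 & Ps2 & Hm2).
      exists (compose Au0 (CAppR side0 E20)), s2, m2. repeat split; try lia.
      * pc. eapply star_trans; [exact S1|]. exact S2.
      * apply isE_need; auto.
      * apply Fr_compose; auto. constructor; auto. apply Fr_plug; auto. apply lam_need_PP; auto.
      * auto.
  - pose proof (isE_plug_lam _ _ _ HE (eq_sym Hu)). subst E.
    exists Hole, (Lam a), n0. simpl in *. subst. repeat split; try constructor; auto.
  - destruct (IHn n0 ltac:(lia) c u0) as [_ [IE _]].
    destruct (IE O E s HO HE Hu Hc) as (E' & s' & m & HS & R).
    exists E', s', m. split.
    + econstructor. apply std_lift; auto. apply root_step; eauto. exact HS.
    + intuition lia.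
Qed.

Lemma I_Ad_proof : forall n t u,
  (forall n' t' u', n' <= n -> tsize u' < tsize u -> All3 n' t' u') ->
  I_E_st n t u -> I_Ad_st n t u.
Proof.
  intros n t u IH HE O Ad X HAdw HHAd Hu HP.
  destruct HAdw as [|A Ad1 HA HAd1].
  - exists Hole, t, n. simpl in Hu; subst. repeat split; auto; constructor.
  - assert (HO : isE O).
    { pose proof (HHAd (compose A (CLam Ad1)) Hole eq_refl isE_hole) as H.
      eapply isE_prefix; [exact H|]. reflexivity. }
    assert (Hu' : u = plug A (Lam (plug Ad1 X))) by (rewrite Hu, plug_compose; reflexivity).
    destruct (HE O A (Lam (plug Ad1 X)) HO (isA_isE _ HA) Hu' HP)
      as (A0 & s1 & m1 & S1 & HA0 & FA0 & Ps1 & Hm1).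
    assert (KA : kinds (compose A0 (CLam Ad1)) = kinds (compose A (CLam Ad1))).
    { rewrite !kinds_compose, (Fr_kinds _ _ FA0). reflexivity. }
    assert (HO2 : isE (compose O A0)).
    { pose proof (HHAd (compose A0 (CLam Ad1)) Hole KA isE_hole) as H.
      eapply isE_prefix; [exact H|]. rewrite !compose_assoc. reflexivity. }
    destruct (I_Lam _ _ _ Ps1 _ eq_refl _ HO2) as (b1 & m2 & S2 & Pb1 & Hm2).
    assert (Hs : tsize (plug Ad1 X) < tsize u).
    { rewrite Hu'. pose proof (tsize_plug_le A (Lam (plug Ad1 X))). simpl in *. lia. }
    destruct (IH m2 b1 _ ltac:(lia) Hs) as [_ [_ IAd]].
    assert (HH3 : HAd (compose O (compose A0 (CLam Hole))) Ad1).
    { intros Ad2 E2 K HE2.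
      assert (K' : kinds (compose A0 (CLam Ad2)) = kinds (compose A (CLam Ad1))).
      { rewrite !kinds_compose, (Fr_kinds _ _ FA0). simpl. rewrite K. reflexivity. }
      pose proof (HHAd _ E2 K' HE2) as H. rewrite !compose_assoc. simpl. rewrite !compose_assoc in H.
      simpl in H. exact H. }
    destruct (IAd _ Ad1 X HAd1 HH3 eq_refl Pb1) as (Ad10 & X' & m3 & S3 & F3 & PX & Hm3).
    exists (compose A0 (CLam Ad10)), X', m3. repeat split; try lia.
    + pc. eapply star_trans; [exact S1|]. eapply star_trans; [exact S2|]. exact S3.
    + apply Fr_compose; auto. constructor; auto.
    + auto.
Qed.

Lemma bundle : forall n t u, All3 n t u.
Proof.
  intro n. induction n as [n IHn] using lt_wf_ind.
  intros t u. remember (tsize u) as k eqn:Hk. revert t u Hk.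
  induction k as [k IHk] using lt_wf_ind. intros t u Hk.
  assert (IH : forall n' t' u', n' <= n -> tsize u' < tsize u -> All3 n' t' u').
  { intros n' t' u' Hn Hs. destruct (Nat.eq_dec n' n) as [->|Hne].
    - eapply IHk; eauto. lia.
    - apply IHn. lia. }
  clear IHk.
  assert (HN : I_need_st n t u) by (apply I_need_proof; auto).
  assert (HE : I_E_st n t u) by (apply I_E_proof; auto).
  split; [exact HN|split; [exact HE|]].
  apply I_Ad_proof; auto.
Qed.

Lemma Main : forall n t u u', P n t u -> std_step u u' -> exists t'', star t t'' /\ PP t'' u'.
Proof.
  intros n t u u' HP Hs. destruct Hs as [E r r' HE Hb].
  destruct Hb as [Au A1 Ad E1 A2 v HAu HA1 HAd HE1 HA2 Hv HAA].
  destruct (bundle n t (plug E (redex Au A1 Ad E1 A2 v))) as [_ [IE _]].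
  destruct (IE Hole E _ isE_hole HE eq_refl HP) as (E0 & s0 & m & S1 & HE0 & FE0 & Ps0 & Hm).
  simpl in S1.
  destruct (bundle m s0 (redex Au A1 Ad E1 A2 v)) as [IN _].
  destruct (IN E0 Au A1 Ad E1 (plug A2 v) HE0 HAu HA1 HAd HE1 (Hneed_init E0 Au Ad HE0 HAu HAd HAA)
     eq_refl Ps0) as (Au0 & A10 & Ad0 & E10 & s1 & m1 & S2 & FAu & FA1 & FAd & FE1 & HE10 & Ps1 & Hm1).
  assert (HAu0 : isAup Au0) by (eapply Fr_isAup; eauto).
  assert (HA10 : isA A10) by (eapply Fr_isA; eauto).
  assert (HAd0 : isAdown Ad0) by (eapply Fr_isAdown; eauto).
  assert (HAA0 : isA (compose Au0 Ad0)).
  { eapply isA_kinds; [exact HAA|]. rewrite !kinds_compose, (Fr_kinds _ _ FAu), (Fr_kinds _ _ FAd). reflexivity. }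
  set (side0 := plug A10 (lam_need Ad0 E10)).
  assert (HO' : isE (compose E0 (compose Au0 (CAppR side0 Hole)))).
  { apply isE_compose; auto. apply isE_need; auto; constructor. }
  destruct (bundle m1 s1 (plug A2 v)) as [_ [IE2 _]].
  destruct (IE2 _ A2 v HO' (isA_isE _ HA2) eq_refl Ps1) as (A20 & v0 & m2 & S3 & HA20 & FA2 & Pv0 & Hm2).
  assert (HA20' : isA A20) by (eapply Fr_isA; eauto).
  destruct Hv as [b ->].
  assert (HO'' : isE (compose (compose E0 (compose Au0 (CAppR side0 Hole))) A20)).
  { apply isE_compose; auto. }
  destruct (I_Lam _ _ _ Pv0 _ eq_refl _ HO'') as (b0 & m3 & S4 & Pb0 & Hm3).
  exists (plug E0 (contractum Au0 A10 Ad0 E10 A20 (Lam b0))). split.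
  - eapply star_trans; [exact S1|]. eapply star_trans; [exact S2|].
    do 3 (repeat rewrite plug_compose in S3; repeat rewrite plug_compose in S4; simpl in S3, S4).
    eapply star_trans; [exact S3|]. eapply star_trans; [exact S4|].
    econstructor; [|constructor].
    change (App side0 (plug A20 (Lam b0))) with (App (plug A10 (lam_need Ad0 E10)) (plug A20 (Lam b0))).
    fold (redex Au0 A10 Ad0 E10 A20 (Lam b0)).
    constructor; auto. constructor; auto. eexists; eauto.
  - apply Fr_plug; auto. apply contractum_PP; auto. apply PP_lam. eapply P_PP; eauto.
Qed.

Definition struct (t0 u : term) : Prop :=
  (exists k, t0 = Var k /\ u = Var k) \/
  (exists a b, t0 = Lam a /\ u = Lam b /\ PP a b) \/
  (exists a b c d, t0 = App a b /\ u = App c d /\ PP a c /\ PP b d).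

Lemma LemS : forall n t u, P n t u -> exists t0, star t t0 /\ struct t0 u.
Proof.
  induction 1.
  - exists t. split; [constructor|]. destruct t; unfold struct.
    + left; eauto.
    + right; left; eauto using PP_refl.
    + right; right; do 4 eexists; eauto using PP_refl.
  - exists (App a b). split; [constructor|]. right; right; do 4 eexists; repeat split; eapply P_PP; eauto.
  - exists (Lam a). split; [constructor|]. right; left; do 2 eexists; repeat split; eapply P_PP; eauto.
  - destruct IHP as (t0 & H1 & H2). exists t0. split; auto. econstructor; eauto. apply root_step; auto.
Qed.

Lemma last_cons_default : forall (l : list term) x d, last (x :: l) d = last l x.
Proof.
  induction l; intros; [reflexivity|].
  change (last (x :: a :: l) d) with (last (a :: l) d). rewrite !IHl. reflexivity.
Qed.

Lemma last_map : forall (f : term -> term) (l : list term) d, last (map f l) (f d) = f (last l d).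
Proof.
  induction l; intros; [reflexivity|].
  simpl map. rewrite !last_cons_default. apply IHl.
Qed.

Lemma last_app_map : forall l1 l2 x y,
  last (map (fun e => App e y) l1 ++ map (App (last l1 x)) l2) (App x y) = App (last l1 x) (last l2 y).
Proof.
  induction l1; intros.
  - apply (last_map (App x) l2 y).
  - rewrite (last_cons_default l1 a x). cbn [map app]. rewrite last_cons_default. apply IHl1.
Qed.

Lemma star_R : forall e t, star e t -> forall l, R (t :: l) -> exists l', R (e :: l') /\ last l' e = last l t.
Proof.
  induction 1; intros l HR.
  - exists l. auto.
  - destruct (IHstar l HR) as (l'' & H1 & H2).
    exists (b :: l''). split. constructor; auto. rewrite last_cons_default. auto.
Qed.

Lemma lemma4_gen : forall L, R L -> forall x xs, L = x :: xs -> forall y, PP y x ->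
  exists l', R (y :: l') /\ last l' y = last xs x.
Proof.
  induction 1 as [k | e l HR IHR | a0 a1 l HS HR IHR | c1 l1 f1 l2 HR1 IHR1 HR2 IHR2];
    intros x xs HL y [nn HP].
  - injection HL as <- <-. destruct (LemS _ _ _ HP) as (t0 & S & Hs).
    destruct Hs as [(k' & -> & Hk)|[(a & b & -> & Hb & _)|(a & b & c & d & -> & Hd & _)]];
      try discriminate.
    injection Hk as ->. apply star_R with (l := []) in S; [|constructor]. exact S.
  - simpl in HL. injection HL as <- <-. destruct (LemS _ _ _ HP) as (t0 & S & Hs).
    destruct Hs as [(k & -> & Hk)|[(a & b & -> & Hb & Hab)|(a & b & c & d & -> & Hd & _)]];
      try discriminate.
    injection Hb as <-.
    destruct (IHR e l eq_refl a Hab) as (la & H1 & H2).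
    apply R_lam in H1. simpl in H1.
    destruct (star_R _ _ S _ H1) as (l' & H3 & H4). exists l'. split; auto.
    rewrite H4. rewrite last_map, H2. symmetry. apply last_map.
  - injection HL as <- <-. destruct (Main nn y a0 a1 HP HS) as (t'' & S & Ht).
    destruct (IHR a1 l eq_refl t'' Ht) as (l'' & H1 & H2).
    destruct (star_R _ _ S _ H1) as (l' & H3 & H4). exists l'. split; auto.
    rewrite H4, H2. symmetry. apply last_cons_default.
  - simpl in HL. injection HL as <- <-. destruct (LemS _ _ _ HP) as (t0 & S & Hs).
    destruct Hs as [(k & -> & Hk)|[(a & b & -> & Hb & _)|(a & b & c & d & -> & Hd & Hac & Hbd)]];
      try discriminate.
    injection Hd as <- <-.
    destruct (IHR1 c1 l1 eq_refl a Hac) as (la & H1 & H2).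
    destruct (IHR2 f1 l2 eq_refl b Hbd) as (lb & H3 & H4).
    pose proof (R_app _ _ _ _ H1 H3) as H5. simpl in H5.
    destruct (star_R _ _ S _ H5) as (l'' & H6 & H7). exists l''. split; auto.
    rewrite H7. rewrite last_app_map. rewrite H2, H4. symmetry. apply last_app_map.
Qed.

Theorem lemma4 : forall (e0 e1 : term) (l : list term),
  pr e0 e1 -> R (e1 :: l) ->
  exists l' : list term, R (e0 :: l') /\ last l' e0 = last l e1.
Proof.
  intros. eapply lemma4_gen; eauto. apply pr_PP; auto.
Qed.
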